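(* Let $R\ge1$ and $\mathbf{x}$ a vector of pairwise distinct reals. Then $$\max_{1\le m\le R}\sum_{n=1}^R a_{m,n}^2\le\Vert A(\mathbf{x})\Vert^2\le 3\max_{1\le m\le R}\sum_{n=1}^R a_{m,n}^2.$$
   Context: $A(\mathbf{x})$ is the $R\times R$ matrix with entries $a_{m,m}=0$ and $a_{m,n}=\frac{1}{x_m-x_n}$ for $m\ne n$; $\Vert\cdot\Vert$ is the operator norm induced by the Euclidean norm. *)

(* Defs.v *)
From Stdlib Require Import Reals Lra Lia Arith ClassicalEpsilon.
Open Scope R_scope.

Fixpoint sumR (n : nat) (f : nat -> R) : R :=
  match n with O => 0 | S k => sumR k f + f k end.

(* maxR n f = max (f 0, ..., f (n-1)) for n >= 1 and nonnegative f
   (base value 0; used only on nonnegative quantities with n >= 1). *)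
Fixpoint maxR (n : nat) (f : nat -> R) : R :=
  match n with O => 0 | S k => Rmax (maxR k f) (f k) end.

(* entries of A(x), indices 0..N-1 *)
Definition amat (x : nat -> R) (m n : nat) : R :=
  if Nat.eq_dec m n then 0 else / (x m - x n).

Definition vnorm2 (N : nat) (v : nat -> R) : R := sumR N (fun i => v i ^ 2).

Definition applyA (N : nat) (x : nat -> R) (v : nat -> R) (m : nat) : R :=
  sumR N (fun n => amat x m n * v n).

Definition opset (N : nat) (x : nat -> R) (r : R) : Prop :=
  exists v : nat -> R, vnorm2 N v <= 1 /\ r = sqrt (vnorm2 N (applyA N x v)).

(* operator norm = sup of the above set (which is bounded and nonempty) *)
Definition opnorm (N : nat) (x : nat -> R) : R :=
  match excluded_middle_informative (exists s, is_lub (opset N x) s) with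
  | left H => proj1_sig (constructive_indefinite_description _ H)
  | right _ => 0
  end.

(* Main.v *)
Require Import Defs.
From Stdlib Require Import Reals Lra Lia Psatz ClassicalEpsilon Classical.
Open Scope R_scope.

Lemma sumR_ext n f g : (forall i, (i < n)%nat -> f i = g i) -> sumR n f = sumR n g.
Proof. induction n; simpl; intros H; auto. rewrite IHn by (intros; apply H; lia). rewrite H by lia. auto. Qed.

Lemma sumR_plus n f g : sumR n (fun i => f i + g i) = sumR n f + sumR n g.
Proof. induction n; simpl; [ring|rewrite IHn; ring]. Qed.
Lemma sumR_minus n f g : sumR n (fun i => f i - g i) = sumR n f - sumR n g.
Proof. induction n; simpl; [ring|rewrite IHn; ring]. Qed.
Lemma sumR_scal n c f : sumR n (fun i => c * f i) = c * sumR n f.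
Proof. induction n; simpl; [ring|rewrite IHn; ring]. Qed.
Lemma sumR_le n f g : (forall i, (i < n)%nat -> f i <= g i) -> sumR n f <= sumR n g.
Proof. induction n; simpl; intros H; [lra|]. pose proof (H n ltac:(lia)). assert (sumR n f <= sumR n g) by (apply IHn; intros; apply H; lia). lra. Qed.
Lemma sumR_nonneg n f : (forall i, (i < n)%nat -> 0 <= f i) -> 0 <= sumR n f.
Proof. intros H. replace 0 with (sumR n (fun _ => 0)). apply sumR_le; auto. induction n; simpl; auto. rewrite IHn; [ring|intros; apply H; lia]. Qed.
Lemma sumR_swap n m f : sumR n (fun i => sumR m (fun j => f i j)) = sumR m (fun j => sumR n (fun i => f i j)).
Proof. induction n; simpl. induction m; simpl; [auto| rewrite <- IHm; ring]. rewrite IHn, <- sumR_plus. auto. Qed.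
Lemma sumR_mult n m f g : sumR n f * sumR m g = sumR n (fun i => sumR m (fun j => f i * g j)).
Proof. rewrite Rmult_comm, <- sumR_scal. apply sumR_ext; intros. rewrite Rmult_comm, <- sumR_scal. apply sumR_ext; intros; ring. Qed.
Lemma sumR_zero n : sumR n (fun _ => 0) = 0.
Proof. induction n; simpl; [ring| rewrite IHn; ring]. Qed.
Lemma sumR_delta n k f : (k < n)%nat -> sumR n (fun i => if Nat.eq_dec k i then f i else 0) = f k.
Proof. induction n; intros H; [lia|]. simpl. destruct (Nat.eq_dec k n).
 - subst k. rewrite (sumR_ext n _ (fun _ => 0)). 2:{ intros; destruct (Nat.eq_dec n i); [lia|auto]. }
   rewrite sumR_zero; ring.
 - rewrite IHn by lia. ring. Qed.
Lemma sumR_delta' n k f : (k < n)%nat -> sumR n (fun i => if Nat.eq_dec i k then f i else 0) = f k.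
Proof. intros H. rewrite <- (sumR_delta n k f H). apply sumR_ext; intros. destruct (Nat.eq_dec i k), (Nat.eq_dec k i); auto; lia. Qed.
Lemma sumR_term_le n f k : (forall i, (i < n)%nat -> 0 <= f i) -> (k < n)%nat -> f k <= sumR n f.
Proof. induction n; intros H Hk; [lia|]. simpl. destruct (Nat.eq_dec k n).
 - subst k. assert (0 <= sumR n f) by (apply sumR_nonneg; intros; apply H; lia). lra.
 - assert (f k <= sumR n f) by (apply IHn; [intros; apply H; lia|lia]). pose proof (H n ltac:(lia)). lra. Qed.
Lemma CS n f g : (sumR n (fun i => f i * g i))^2 <= sumR n (fun i => f i ^2) * sumR n (fun i => g i^2).
Proof. induction n; cbn [sumR]. { simpl; lra. }
 set (Z := sumR n (fun i => f i * g i)) in *. set (X := sumR n (fun i => f i ^2)) in *.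
 set (Y := sumR n (fun i => g i ^2)) in *.
 assert (HX : 0 <= X) by (apply sumR_nonneg; intros; nra). assert (HY : 0 <= Y) by (apply sumR_nonneg; intros; nra).
 set (a := f n) in *. set (b := g n) in *.
 assert (2 * Z * a * b <= X * b^2 + Y * a^2).
 { destruct (Req_dec X 0) as [H0|H0].
   - assert (Z = 0) by (rewrite H0 in IHn; nra). rewrite H, H0. nra.
   - assert (X * (X * b^2 + Y * a^2 - 2 * Z * a * b) = (X*b - Z*a)^2 + (X*Y - Z*Z)*a^2) by ring.
     assert (0 <= (X*b - Z*a)^2 + (X*Y - Z*Z)*a^2).
     { apply Rplus_le_le_0_compat; [apply pow2_ge_0|apply Rmult_le_pos; [lra|apply pow2_ge_0]]. }
     assert (0 < X) by lra. assert (0 <= X * b^2 + Y * a^2 - 2 * Z * a * b); [|lra].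
     apply (Rmult_le_reg_l X); [lra|]. lra. }
 nra. Qed.

Section S.
Variable N : nat.
Variable x : nat -> R.
Hypothesis Hx : forall i j : nat, (i < N)%nat -> (j < N)%nat -> i <> j -> x i <> x j.

Let a := amat x.

Lemma amat_anti m n : amat x m n = - amat x n m.
Proof. unfold amat. destruct (Nat.eq_dec m n), (Nat.eq_dec n m); try lia; try ring.
 replace (x n - x m) with (- (x m - x n)) by ring. rewrite Rinv_opp. ring. Qed.
Lemma amat_diag m : amat x m m = 0.
Proof. unfold amat. destruct (Nat.eq_dec m m); [auto|lia]. Qed.

Lemma key m n k : (m < N)%nat -> (n < N)%nat -> (k < N)%nat ->
  amat x m n * amat x m k = amat x k n * amat x m k - amat x k n * amat x m n
   + (if Nat.eq_dec n k then amat x m n ^ 2 else 0)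
   + (if Nat.eq_dec m n then amat x m k ^ 2 else 0)
   + (if Nat.eq_dec m k then amat x m n ^ 2 else 0).
Proof. intros Hm Hn Hk.
 assert (Hd : forall i j, (i < N)%nat -> (j < N)%nat -> i <> j -> x i - x j <> 0).
 { intros i j Hi Hj Hij. pose proof (Hx i j Hi Hj Hij). lra. }
 unfold amat; repeat destruct (Nat.eq_dec _ _); subst; try congruence; try ring;
 field; repeat split; apply Hd; auto; lia.
Qed.

Definition sum3 (f : nat -> nat -> nat -> R) :=
  sumR N (fun m => sumR N (fun n => sumR N (fun k => f m n k))).
Lemma sum3_plus f g : sum3 (fun m n k => f m n k + g m n k) = sum3 f + sum3 g.
Proof. unfold sum3. rewrite <- sumR_plus. apply sumR_ext; intros. rewrite <- sumR_plus.
 apply sumR_ext; intros. apply sumR_plus. Qed.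
Lemma sum3_minus f g : sum3 (fun m n k => f m n k - g m n k) = sum3 f - sum3 g.
Proof. unfold sum3. rewrite <- sumR_minus. apply sumR_ext; intros. rewrite <- sumR_minus.
 apply sumR_ext; intros. apply sumR_minus. Qed.
Lemma sum3_rev f : sum3 f = sumR N (fun k => sumR N (fun n => sumR N (fun m => f m n k))).
Proof. unfold sum3. rewrite sumR_swap.
 transitivity (sumR N (fun n => sumR N (fun k => sumR N (fun m => f m n k)))).
 apply sumR_ext; intros; apply sumR_swap. apply sumR_swap. Qed.

Lemma sumR_opp n f : sumR n (fun i => - f i) = - sumR n f.
Proof. induction n; simpl; [ring|rewrite IHn; ring]. Qed.
Definition ss k := sumR N (fun j => amat x k j).
Definition rr m := sumR N (fun n => amat x m n ^ 2).

Lemma colsum k : sumR N (fun m => amat x m k) = - ss k.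
Proof. unfold ss. rewrite <- sumR_opp. apply sumR_ext; intros. rewrite amat_anti. ring. Qed.
Lemma colsq k : sumR N (fun m => amat x m k ^ 2) = rr k.
Proof. apply sumR_ext; intros. rewrite amat_anti. ring. Qed.

Lemma sumR_scal_r n c f : sumR n (fun i => f i * c) = sumR n f * c.
Proof. induction n; simpl; [ring|rewrite IHn; ring]. Qed.
Lemma colA v n : sumR N (fun k => amat x k n * v k) = - applyA N x v n.
Proof. unfold applyA; rewrite <- sumR_opp; apply sumR_ext; intros; rewrite amat_anti; ring. Qed.

Lemma ident v : vnorm2 N (applyA N x v) =
  sumR N (fun n => rr n * v n ^ 2)
  + 2 * sumR N (fun m => sumR N (fun k => amat x m k ^ 2 * v m * v k))
  - 2 * sumR N (fun k => ss k * v k * applyA N x v k).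
Proof.
 transitivity (sum3 (fun m n k => amat x m n * amat x m k * (v n * v k))).
 { unfold vnorm2, applyA, sum3. apply sumR_ext; intros m Hm.
   match goal with |- ?s ^ 2 = _ => replace (s^2) with (s*s) by ring end.
   rewrite sumR_mult. apply sumR_ext; intros; apply sumR_ext; intros; ring. }
 transitivity (sum3 (fun m n k => amat x k n * amat x m k * (v n * v k))
   - sum3 (fun m n k => amat x k n * amat x m n * (v n * v k))
   + sum3 (fun m n k => (if Nat.eq_dec n k then amat x m n ^ 2 else 0) * (v n * v k))
   + sum3 (fun m n k => (if Nat.eq_dec m n then amat x m k ^ 2 else 0) * (v n * v k))
   + sum3 (fun m n k => (if Nat.eq_dec m k then amat x m n ^ 2 else 0) * (v n * v k))).
 { rewrite <- sum3_minus, <- !sum3_plus. unfold sum3.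
   apply sumR_ext; intros m Hm; apply sumR_ext; intros n Hn; apply sumR_ext; intros k Hk.
   rewrite (key m n k) by auto. ring. }
 assert (E1 : sum3 (fun m n k => amat x k n * amat x m k * (v n * v k)) = - sumR N (fun k => ss k * v k * applyA N x v k)).
 { rewrite sum3_rev. rewrite <- sumR_opp; apply sumR_ext; intros k Hk.
   transitivity (sumR N (fun n => amat x k n * (v n * v k) * sumR N (fun m => amat x m k))).
   { apply sumR_ext; intros; rewrite Rmult_comm, <- sumR_scal; apply sumR_ext; intros; ring. }
   rewrite colsum. unfold applyA.
   replace (-(ss k * v k * sumR N (fun n => amat x k n * v n))) with ((- ss k * v k) * sumR N (fun n => amat x k n * v n)) by ring.
   rewrite <- sumR_scal; apply sumR_ext; intros; ring. }
 assert (E2 : sum3 (fun m n k => amat x k n * amat x m n * (v n * v k)) = sumR N (fun n => ss n * v n * applyA N x v n)).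
 { unfold sum3. rewrite sumR_swap. apply sumR_ext; intros n Hn.
   transitivity (sumR N (fun m => amat x m n * (v n * sumR N (fun k => amat x k n * v k)))).
   { apply sumR_ext; intros. rewrite <- !sumR_scal. apply sumR_ext; intros; ring. }
   rewrite sumR_scal_r, colsum, colA. ring. }
 assert (E3 : sum3 (fun m n k => (if Nat.eq_dec n k then amat x m n ^ 2 else 0) * (v n * v k)) = sumR N (fun n => rr n * v n ^ 2)).
 { unfold sum3. rewrite sumR_swap. apply sumR_ext; intros n Hn.
   transitivity (sumR N (fun m => amat x m n ^2 * (v n * v n))).
   { apply sumR_ext; intros m Hm.
     rewrite (sumR_ext N _ (fun k => if Nat.eq_dec n k then amat x m n^2 * (v n * v k) else 0)).
     apply (sumR_delta N n (fun k => amat x m n ^ 2 * (v n * v k)) Hn).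
     intros; destruct (Nat.eq_dec n i); ring. }
   rewrite sumR_scal_r, colsq. ring. }
 assert (E4 : sum3 (fun m n k => (if Nat.eq_dec m n then amat x m k ^ 2 else 0) * (v n * v k)) = sumR N (fun m => sumR N (fun k => amat x m k ^ 2 * v m * v k))).
 { unfold sum3. apply sumR_ext; intros m Hm.
   rewrite (sumR_ext N _ (fun n => if Nat.eq_dec m n then sumR N (fun k => amat x m k ^2 * v n * v k) else 0)).
   apply (sumR_delta N m (fun n => sumR N (fun k => amat x m k ^ 2 * v n * v k)) Hm).
   intros n Hn; destruct (Nat.eq_dec m n). subst n. apply sumR_ext; intros; ring.
   rewrite (sumR_ext N _ (fun _ => 0)) by (intros; ring). apply sumR_zero. }
 assert (E5 : sum3 (fun m n k => (if Nat.eq_dec m k then amat x m n ^ 2 else 0) * (v n * v k)) = sumR N (fun m => sumR N (fun k => amat x m k ^ 2 * v m * v k))).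
 { unfold sum3. apply sumR_ext; intros m Hm. apply sumR_ext; intros n Hn.
   rewrite (sumR_ext N _ (fun k => if Nat.eq_dec m k then amat x m n ^2 * (v n * v k) else 0)).
   rewrite (sumR_delta N m (fun k => amat x m n ^ 2 * (v n * v k)) Hm). ring.
   intros; destruct (Nat.eq_dec m i); ring. }
 rewrite E1, E2, E3, E4, E5. ring.
Qed.

Definition Qf v := sumR N (fun n => rr n * v n ^ 2)
  + 2 * sumR N (fun m => sumR N (fun k => amat x m k ^ 2 * v m * v k)).

Lemma Qbound M v : (forall n, (n < N)%nat -> rr n <= M) -> Qf v <= 3 * M * vnorm2 N v.
Proof. intros HM. unfold Qf, vnorm2.
 assert (B1 : sumR N (fun n => rr n * v n ^ 2) <= M * sumR N (fun n => v n ^ 2)).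
 { rewrite <- sumR_scal. apply sumR_le; intros. apply Rmult_le_compat_r; [apply pow2_ge_0|auto]. }
 assert (B2 : sumR N (fun k => rr k * v k ^ 2) = sumR N (fun m => sumR N (fun k => amat x m k ^ 2 * v k ^ 2))).
 { rewrite sumR_swap. apply sumR_ext; intros. rewrite sumR_scal_r, colsq. auto. }
 assert (B3 : sumR N (fun k => rr k * v k ^ 2) = sumR N (fun m => sumR N (fun k => amat x m k ^ 2 * v m ^ 2))).
 { apply sumR_ext; intros. rewrite sumR_scal_r. auto. }
 assert (B4 : 2 * sumR N (fun m => sumR N (fun k => amat x m k ^ 2 * v m * v k)) <=
   sumR N (fun m => sumR N (fun k => amat x m k ^ 2 * v m ^ 2)) + sumR N (fun m => sumR N (fun k => amat x m k ^ 2 * v k ^ 2))).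
 { rewrite <- sumR_scal, <- sumR_plus. apply sumR_le; intros.
   rewrite <- sumR_scal, <- sumR_plus. apply sumR_le; intros.
   assert (0 <= amat x i i0 ^ 2 * (v i - v i0) ^ 2) by (apply Rmult_le_pos; apply pow2_ge_0). nra. }
 lra.
Qed.

Lemma anti_ip v u : sumR N (fun i => v i * applyA N x u i) = - sumR N (fun i => applyA N x v i * u i).
Proof. unfold applyA. rewrite <- sumR_opp.
 transitivity (sumR N (fun i => sumR N (fun j => v i * amat x i j * u j))).
 { apply sumR_ext; intros. rewrite <- sumR_scal. apply sumR_ext; intros; ring. }
 rewrite sumR_swap. apply sumR_ext; intros j Hj. rewrite <- sumR_scal_r, <- sumR_opp.
 apply sumR_ext; intros. rewrite (amat_anti i j). ring. Qed.

Lemma applyA_scal c v m : applyA N x (fun i => c * v i) m = c * applyA N x v m.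
Proof. unfold applyA. rewrite <- sumR_scal. apply sumR_ext; intros; ring. Qed.
Lemma vnorm2_scal c f : vnorm2 N (fun i => c * f i) = c ^ 2 * vnorm2 N f.
Proof. unfold vnorm2. rewrite <- sumR_scal. apply sumR_ext; intros; ring. Qed.
Lemma vnorm2_nonneg f : 0 <= vnorm2 N f.
Proof. apply sumR_nonneg; intros; apply pow2_ge_0. Qed.
Lemma vnorm2_A_scal c v : vnorm2 N (applyA N x (fun i => c * v i)) = c ^ 2 * vnorm2 N (applyA N x v).
Proof. rewrite <- vnorm2_scal. unfold vnorm2. apply sumR_ext; intros. rewrite applyA_scal. auto. Qed.

Lemma A_bound v : vnorm2 N (applyA N x v) <= sumR N rr * vnorm2 N v.
Proof. unfold vnorm2 at 1. rewrite <- sumR_scal_r. apply sumR_le; intros m Hm.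
 unfold applyA. apply (CS N (fun n => amat x m n) v). Qed.

Lemma sqrt_le_sq y b : 0 <= y -> sqrt y <= b -> y <= b ^ 2.
Proof. intros H1 H2. pose proof (sqrt_pos y). rewrite <- (pow2_sqrt y H1). nra. Qed.

Lemma opnorm_lub : is_lub (opset N x) (opnorm N x).
Proof. unfold opnorm. destruct (excluded_middle_informative _) as [H|H].
 - destruct (constructive_indefinite_description _ H) as [s Hs]. exact Hs.
 - exfalso; apply H. destruct (completeness (opset N x)) as [s Hs].
   + exists (sqrt (sumR N rr)). intros r [v [Hv ->]]. apply sqrt_le_1_alt.
     pose proof (A_bound v). assert (0 <= sumR N rr) by (apply sumR_nonneg; intros; apply sumR_nonneg; intros; apply pow2_ge_0).
     pose proof (vnorm2_nonneg v). nra.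
   + exists (sqrt (vnorm2 N (applyA N x (fun _ => 0)))). exists (fun _ => 0). split; auto.
     unfold vnorm2. rewrite (sumR_ext N _ (fun _ => 0)) by (intros; ring). rewrite sumR_zero. lra.
   + exists s; auto.
Qed.

Lemma opnorm_nonneg : 0 <= opnorm N x.
Proof. destruct opnorm_lub as [H _]. eapply Rle_trans; [apply (sqrt_pos (vnorm2 N (applyA N x (fun _ => 0))))|].
 apply H. exists (fun _ => 0). split; auto.
 unfold vnorm2. rewrite (sumR_ext N _ (fun _ => 0)) by (intros; ring). rewrite sumR_zero. lra. Qed.

Lemma in_opset v : vnorm2 N v <= 1 -> vnorm2 N (applyA N x v) <= opnorm N x ^ 2.
Proof. intros Hv. apply sqrt_le_sq; [apply vnorm2_nonneg|]. apply opnorm_lub. exists v; auto. Qed.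

Lemma L v : vnorm2 N (applyA N x v) <= opnorm N x ^ 2 * vnorm2 N v.
Proof. pose proof (vnorm2_nonneg v) as H0. pose proof (vnorm2_nonneg (applyA N x v)) as H1.
 destruct H0 as [Hp|Hz].
 - set (c := / sqrt (vnorm2 N v)).
   assert (Hs : 0 < sqrt (vnorm2 N v)) by (apply sqrt_lt_R0; auto).
   assert (Hc2 : c ^ 2 * vnorm2 N v = 1).
   { unfold c. rewrite <- (pow2_sqrt (vnorm2 N v)) at 2 by lra. field. lra. }
   pose proof (in_opset (fun i => c * v i)). rewrite vnorm2_scal, vnorm2_A_scal in H. specialize (H ltac:(lra)).
   assert (vnorm2 N (applyA N x v) = vnorm2 N v * (c ^ 2 * vnorm2 N (applyA N x v))) by (replace (vnorm2 N v * (c ^ 2 * vnorm2 N (applyA N x v))) with ((c ^ 2 * vnorm2 N v) * vnorm2 N (applyA N x v)) by ring; rewrite Hc2; ring).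
   rewrite H0. rewrite Rmult_comm. apply Rmult_le_compat_r; lra.
 - rewrite <- Hz. rewrite Rmult_0_r. destruct H1 as [Ht|Ht]; [|lra]. exfalso.
   set (t := vnorm2 N (applyA N x v)) in *.
   set (l := sqrt ((opnorm N x ^ 2 + 1) / t)).
   pose proof (in_opset (fun i => l * v i)). rewrite vnorm2_scal, vnorm2_A_scal in H. rewrite <- Hz in H.
   specialize (H ltac:(lra)). fold t in H. unfold l in H. rewrite pow2_sqrt in H.
   + field_simplify in H; lra.
   + unfold Rdiv; apply Rmult_le_pos; [pose proof (pow2_ge_0 (opnorm N x)); lra|left; apply Rinv_0_lt_compat; lra].
Qed.


Lemma lower m : (m < N)%nat -> rr m <= opnorm N x ^ 2.
Proof. intros Hm. set (e := fun i => if Nat.eq_dec i m then 1 else 0).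
 assert (He : vnorm2 N e = 1).
 { unfold vnorm2. rewrite (sumR_ext N _ (fun i => if Nat.eq_dec i m then 1 else 0)).
   apply (sumR_delta' N m (fun _ => 1) Hm). intros; unfold e; destruct (Nat.eq_dec i m); ring. }
 assert (HA : forall n, applyA N x e n = amat x n m).
 { intros n. unfold applyA. rewrite (sumR_ext N _ (fun k => if Nat.eq_dec k m then amat x n k else 0)).
   apply (sumR_delta' N m (fun k => amat x n k) Hm). intros; unfold e; destruct (Nat.eq_dec i m); ring. }
 assert (vnorm2 N (applyA N x e) = rr m).
 { unfold vnorm2. rewrite <- colsq. apply sumR_ext; intros. rewrite HA. auto. }
 rewrite <- H. apply in_opset. lra. Qed.

Lemma upper M : (forall n, (n < N)%nat -> rr n <= M) -> 0 <= M -> opnorm N x ^ 2 <= 3 * M.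
Proof. intros HM HM0. set (op := opnorm N x). set (mu := op ^ 2).
 pose proof opnorm_nonneg as Hop. fold op in Hop.
 destruct (Rle_or_lt mu (3 * M)) as [H|H]; [auto|exfalso].
 set (g := mu - 3 * M). assert (Hg : 0 < g) by (unfold g; lra).
 assert (Hmu : 0 < mu) by lra.
 set (sig := sumR N (fun i => ss i ^ 2)).
 assert (Hsig : 0 <= sig) by (apply sumR_nonneg; intros; apply pow2_ge_0).
 set (d := g / (sig + 1)). assert (Hd : 0 < d) by (unfold d; apply Rdiv_lt_0_compat; lra).
 assert (Hds : d * sig < g).
 { unfold d. apply (Rmult_lt_reg_r (sig + 1)); [lra|]. field_simplify; [|lra]. nra. }
 set (D := / d). assert (HdD : d * D = 1) by (unfold D; field; lra).
 assert (HD : 0 < D) by (unfold D; apply Rinv_0_lt_compat; lra).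
 set (eta := g * d / (2 * (3 * d + 1))).
 assert (Heta : 0 < eta) by (unfold eta; apply Rdiv_lt_0_compat; nra).
 assert (Heta2 : 3 * eta + eta * D = g / 2).
 { unfold eta, D. field. lra. }
 set (eta' := eta / (2 * op + 1)).
 assert (Heta' : 0 < eta') by (unfold eta'; apply Rdiv_lt_0_compat; lra).
 assert (Heta'2 : 2 * op * eta' <= eta).
 { unfold eta'. apply (Rmult_le_reg_r (2 * op + 1)); [lra|]. field_simplify; [|lra]. nra. }
 destruct (classic (exists r, opset N x r /\ op - eta' < r)) as [[r [[v [Hv ->]] Hr]]|Hn].
 2:{ destruct opnorm_lub as [_ Hl]. fold op in Hl.
     assert (op <= op - eta'); [|lra]. apply Hl. intros r Hr'.
     destruct (Rle_or_lt r (op - eta')) as [?|?]; auto. exfalso; apply Hn; eauto. }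
 set (w := applyA N x v). set (z := applyA N x w). set (t := vnorm2 N w). set (nu := vnorm2 N v).
 fold w in Hr. fold t in Hr.
 assert (Hnu0 : 0 <= nu) by apply vnorm2_nonneg.
 assert (Ht0 : 0 <= t) by apply vnorm2_nonneg.
 assert (Htmu : t <= mu * nu) by apply L.
 assert (Htlow : mu - eta <= t).
 { destruct (Rle_or_lt (op - eta') 0).
   - unfold mu. nra.
   - assert ((op - eta') ^ 2 <= t). { pose proof (sqrt_pos t). rewrite <- (pow2_sqrt t Ht0). nra. } unfold mu. nra. }
 set (e := fun i => - z i - mu * v i).
 set (E := vnorm2 N e).
 assert (HE0 : 0 <= E) by apply vnorm2_nonneg.
 assert (F1 : vnorm2 N z <= mu * t) by apply L.
 assert (F2 : sumR N (fun i => v i * z i) = - t).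
 { unfold z. rewrite anti_ip. fold w. f_equal. unfold t, vnorm2. apply sumR_ext; intros; ring. }
 assert (F3 : E = vnorm2 N z + 2 * mu * sumR N (fun i => v i * z i) + mu ^ 2 * nu).
 { unfold E, nu, vnorm2. rewrite (sumR_ext N _ (fun i => z i ^ 2 + (2 * mu) * (v i * z i) + mu ^ 2 * v i ^ 2)).
   rewrite !sumR_plus, !sumR_scal. ring. intros; unfold e; ring. }
 assert (F4 := ident v). fold w t in F4.
 assert (F5 := ident w). fold z in F5.
 assert (F6 : sumR N (fun k => ss k * w k * z k) = - sumR N (fun k => ss k * w k * e k) - mu * sumR N (fun k => ss k * v k * w k)).
 { rewrite <- sumR_scal, <- sumR_opp, <- sumR_minus. apply sumR_ext; intros; unfold e; ring. }
 assert (F7 : 2 * sumR N (fun k => ss k * w k * e k) <= d * sumR N (fun k => (ss k * w k) ^ 2) + D * E).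
 { unfold E, vnorm2. rewrite <- !sumR_scal, <- sumR_plus. apply sumR_le; intros.
   assert (Hsq : d * (d * (ss i * w i) ^ 2 + D * e i ^ 2 - 2 * (ss i * w i * e i)) = (d * (ss i * w i) - e i) ^ 2).
   { replace (d * (d * (ss i * w i) ^ 2 + D * e i ^ 2 - 2 * (ss i * w i * e i))) with
       (d * d * (ss i * w i) ^ 2 + (d * D) * e i ^ 2 - 2 * d * (ss i * w i * e i)) by ring. rewrite HdD. ring. }
   assert (0 <= d * (d * (ss i * w i) ^ 2 + D * e i ^ 2 - 2 * (ss i * w i * e i))) by (rewrite Hsq; apply pow2_ge_0).
   assert (0 <= d * (ss i * w i) ^ 2 + D * e i ^ 2 - 2 * (ss i * w i * e i)); [|lra].
   apply (Rmult_le_reg_l d); lra. }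
 assert (F8 : sumR N (fun k => (ss k * w k) ^ 2) <= sig * t).
 { unfold t, vnorm2. rewrite <- sumR_scal. apply sumR_le; intros.
   assert (ss i ^ 2 <= sig) by (apply (sumR_term_le N (fun i => ss i ^ 2)); [intros; apply pow2_ge_0|auto]).
   pose proof (pow2_ge_0 (w i)). replace ((ss i * w i) ^ 2) with (ss i ^ 2 * w i ^ 2) by ring. nra. }
 assert (Qv := Qbound M v HM). fold nu in Qv. unfold Qf in Qv.
 assert (Qw := Qbound M w HM). fold t in Qw. unfold Qf in Qw.
 set (X := sumR N (fun k => ss k * v k * w k)) in *.
 set (Y := sumR N (fun k => ss k * w k * e k)) in *.
 set (Q1 := sumR N (fun n => rr n * v n ^ 2) + 2 * sumR N (fun m => sumR N (fun k => amat x m k ^ 2 * v m * v k))) in *.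
 set (Q2 := sumR N (fun n => rr n * w n ^ 2) + 2 * sumR N (fun m => sumR N (fun k => amat x m k ^ 2 * w m * w k))) in *.
 set (Z2 := sumR N (fun k => (ss k * w k) ^ 2)) in *.
 assert (C1 : mu * t + vnorm2 N z = mu * Q1 + Q2 + 2 * Y).
 { assert (mu * t = mu * Q1 - 2 * mu * X) by (rewrite F4; ring). rewrite F5, F6. lra. }
 assert (C2 : vnorm2 N z = E + 2 * mu * t - mu ^ 2 * nu) by (rewrite F3, F2; ring).
 assert (C3 : E <= mu * (mu * nu - t)) by (rewrite F3, F2; lra).
 assert (Hnu1 : nu <= 1) by exact Hv.
 assert (Hmn : mu * nu <= mu * 1) by (apply Rmult_le_compat_l; lra).
 assert (C3' : E <= mu * (mu - t)).
 { apply Rle_trans with (mu * (mu * nu - t)); [auto|apply Rmult_le_compat_l; lra]. }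
 assert (C4 : D * E <= D * (mu * (mu - t))) by (apply Rmult_le_compat_l; lra).
 assert (C5a : mu * Q1 <= mu * (3 * M * nu)) by (apply Rmult_le_compat_l; lra).
 assert (C5b : 3 * M * nu <= 3 * M * 1) by (apply Rmult_le_compat_l; lra).
 assert (C5c : mu * (3 * M * nu) <= mu * (3 * M * 1)) by (apply Rmult_le_compat_l; lra).
 assert (P1 : d * Z2 <= d * (sig * t)) by (apply Rmult_le_compat_l; lra).
 assert (P2 : mu ^ 2 * nu <= mu ^ 2 * 1) by (apply Rmult_le_compat_l; [apply pow2_ge_0|lra]).
 assert (C6 : 3 * mu * t - mu ^ 2 <= 3 * M * mu + 3 * M * t + d * (sig * t) + D * (mu * (mu - t))) by lra.
 assert (C7 : t <= mu) by lra.
 assert (C8 : D * (mu * (mu - t)) <= D * (mu * eta)).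
 { apply Rmult_le_compat_l; [lra|]. apply Rmult_le_compat_l; lra. }
 assert (C9 : d * (sig * t) <= d * (sig * mu)).
 { apply Rmult_le_compat_l; [lra|]. apply Rmult_le_compat_l; lra. }
 assert (C9b : 3 * M * t <= 3 * M * mu) by (apply Rmult_le_compat_l; lra).
 assert (C9c : 3 * mu * (mu - eta) <= 3 * mu * t) by (apply Rmult_le_compat_l; lra).
 assert (C10 : mu * (2 * g - 3 * eta - d * sig - eta * D) <= 0).
 { unfold g. assert (mu * (2 * (mu - 3 * M) - 3 * eta - d * sig - eta * D) =
     3 * mu * (mu - eta) - mu ^ 2 - (3 * M * mu + 3 * M * mu + d * (sig * mu) + D * (mu * eta))) by ring.
   lra. }
 assert (C11 : 0 < mu * (2 * g - 3 * eta - d * sig - eta * D)) by (apply Rmult_lt_0_compat; lra).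
 lra.
Qed.
End S.

Lemma maxR_ge n f m : (m < n)%nat -> f m <= maxR n f.
Proof. induction n; intros H; [lia|]. simpl. destruct (Nat.eq_dec m n).
 subst; apply Rmax_r. eapply Rle_trans; [apply IHn; lia|apply Rmax_l]. Qed.
Lemma maxR_le n f B : 0 <= B -> (forall m, (m < n)%nat -> f m <= B) -> maxR n f <= B.
Proof. induction n; intros H0 H; simpl; auto. apply Rmax_lub; [apply IHn; auto; intros; apply H; lia|apply H; lia]. Qed.
Lemma maxR_nonneg n f : 0 <= maxR n f.
Proof. induction n; simpl; [lra|]. eapply Rle_trans; [apply IHn|apply Rmax_l]. Qed.

Theorem corollary2 (N : nat) (x : nat -> R)
  (HN : (1 <= N)%nat)
  (Hx : forall i j : nat, (i < N)%nat -> (j < N)%nat -> i <> j -> x i <> x j) :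
  maxR N (fun m => sumR N (fun n => amat x m n ^ 2)) <= opnorm N x ^ 2 /\
  opnorm N x ^ 2 <= 3 * maxR N (fun m => sumR N (fun n => amat x m n ^ 2)).
Proof. split.
 - apply (maxR_le N _ (opnorm N x ^ 2)). { pose proof (pow2_ge_0 (opnorm N x)); lra. } intros m Hm. apply (lower N x m Hm).
 - apply (upper N x Hx). intros n Hn. apply (maxR_ge N (fun m => sumR N (fun n => amat x m n ^ 2))); auto.
   apply maxR_nonneg.
Qed.
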